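(* Let $\mathcal{G}_{55}$ be the network described in the context, with nodes $(i,j)$, $1\le i,j\le5$. Let $X$ be the set of nodes $\{(1,1),(2,2),(3,3),(4,4),(5,5),(1,4),(2,1),(3,5),(4,3),(5,2)\}$, and let $K$ be the 2-coloring in which nodes in $X$ have one color and all other 15 nodes have a second color. Then $K$ is balanced, but $K$ is not an orbit coloring for $\mathbb{S}_5\times\mathbb{S}_5$, i.e. there is no subgroup $\Sigma\subseteq\mathbb{S}_5\times\mathbb{S}_5$ whose orbits on the nodes are exactly the two color classes of $K$.
   Context: For integers $m,n\ge1$, the network $\mathcal{G}_{mn}$ has node set $\{(i,j):1\le i\le m,\ 1\le j\le n\}$ ($i$ indexes rows, $j$ columns), all nodes of the same type. For each ordered pair of distinct nodes $(c,d)$ there is exactly one arrow with head $c$ and tail $d$, whose type is: ''row'' if $c,d$ lie in the same row, ''column'' if they lie in the same column, ''diagonal'' otherwise; in addition each node has an internal arrow from itself to itself (a fourth type). The group $\mathbb{S}_m\times\mathbb{S}_n$ acts on the nodes by $(\sigma,\tau)\cdot(i,j)=(\sigma(i),\tau(j))$; it is the symmetry group of $\mathcal{G}_{mn}$. A coloring is a map from nodes to a set of colors (identified up to the partition it induces). A coloring is balanced if whenever nodes $c,d$ have the same color, for every arrow type and every color $k$ the number of input arrows of that type to $c$ with tail of color $k$ equals the corresponding number for $d$. For a subgroup $\Sigma$ of the symmetry group, the orbit coloring of $\Sigma$ has as color classes the $\Sigma$-orbits on nodes; a coloring is an orbit coloring if it is the orbit coloring of some such subgroup. *)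

(* Defs.v *)
From HB Require Import structures.
From mathcomp Require Import all_boot all_order all_fingroup.
Set Implicit Arguments. Unset Strict Implicit. Unset Printing Implicit Defensive.

(* Nodes of G_{mn}: (i,j) with i a row index in 'I_m, j a column index in 'I_n
   (0-indexed: paper's (i,j) is (i-1,j-1) here). *)
Definition node (m n : nat) := ('I_m * 'I_n)%type.

Inductive atype := Row | Col | Diag | Intr.

Definition atype_eqb (a b : atype) : bool :=
  match a, b with
  | Row, Row | Col, Col | Diag, Diag | Intr, Intr => true
  | _, _ => false
  end.

Lemma atype_eqP : Equality.axiom atype_eqb.
Proof. by case; case; constructor. Qed.

HB.instance Definition _ := hasDecEq.Build atype atype_eqP.

(* Type of the unique arrow with head c and tail d (internal if c = d). *)
Definition arrow_type m n (c d : node m n) : atype :=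
  if c == d then Intr
  else if c.1 == d.1 then Row
  else if c.2 == d.2 then Col
  else Diag.

Definition in_count m n (C : eqType) (col : node m n -> C)
    (c : node m n) (t : atype) (k : C) : nat :=
  #|[set d : node m n | (arrow_type c d == t) && (col d == k)]|.

Definition balanced m n (C : eqType) (col : node m n -> C) : Prop :=
  forall c d : node m n, col c = col d ->
    forall (t : atype) (k : C), in_count col c t k = in_count col d t k.

Definition symG m n := ({perm 'I_m} * {perm 'I_n})%type.

Definition act m n (g : symG m n) (c : node m n) : node m n :=
  (g.1 c.1, g.2 c.2).

Definition orbit_coloring m n (C : eqType) (col : node m n -> C) : Prop :=
  exists Sigma : {group symG m n},
    forall c d : node m n,
      (exists2 g, g \in Sigma & act g c = d) <-> col c = col d.

Definition X55 : {set node 5 5} :=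
  [set c : node 5 5 |
    (nat_of_ord c.1, nat_of_ord c.2) \in
      [:: (0,0); (1,1); (2,2); (3,3); (4,4); (0,3); (1,0); (2,4); (3,2); (4,1)]].

Definition K55 (c : node 5 5) : bool := c \in X55.

(* Main.v *)
Require Import Defs.
From mathcomp Require Import all_boot all_order all_fingroup.
Definition c0 : node 5 5 := (@Ordinal 5 0 isT, @Ordinal 5 4 isT).
Definition Kc (c : node 5 5) : bool := (nat_of_ord c.1, nat_of_ord c.2) \in
      [:: (0,0); (1,1); (2,2); (3,3); (4,4); (0,3); (1,0); (2,4); (3,2); (4,1)].
Lemma KcE c : K55 c = Kc c.
Proof. by rewrite /K55 /X55 inE. Qed.
Definition ords : seq 'I_5 := [:: @Ordinal 5 0 isT; @Ordinal 5 1 isT; @Ordinal 5 2 isT; @Ordinal 5 3 isT; @Ordinal 5 4 isT].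
Definition nodes : seq (node 5 5) := [seq (i, j) | i <- ords, j <- ords].
Lemma ords_all (i : 'I_5) : i \in ords.
Proof.
case: i => -[|[|[|[|[|i]]]]] Hi //;
 rewrite inE; apply/orP; first [left; apply/eqP/val_inj; reflexivity | right]; 
 repeat (rewrite inE; apply/orP; first [left; apply/eqP/val_inj; reflexivity | right]).
Qed.
Lemma nodes_all (c : node 5 5) : c \in nodes.
Proof. case: c => i j; apply/allpairsP; exists (i, j); by rewrite !ords_all. Qed.
Lemma perm_nodes : perm_eq (enum {: 'I_5 * 'I_5}) nodes.
Proof.
apply: uniq_perm; first exact: enum_uniq.
  by vm_compute.
by move=> x; rewrite mem_enum nodes_all.
Qed.
Definition cnt (c : node 5 5) t k := count (fun d => (arrow_type c d == t) && (Kc d == k)) nodes.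
Lemma cntE c t k : in_count K55 c t k = cnt c t k.
Proof. rewrite /in_count cardE /cnt -((seq.permP perm_nodes) _) -size_filter /enum_mem.
 rewrite -filter_predI; apply: congr1; apply: eq_filter => d /=; by rewrite inE KcE andbT. Qed.
Lemma nowit : all (fun d => 
  ~~ [&& Kc (c0.1, d.2), Kc (d.1, c0.2) & Kc d]) nodes.
Proof. vm_compute. reflexivity. Qed.
Lemma bal : all (fun c => all (fun d => (Kc c == Kc d) ==>
  all (fun t => all (fun k => cnt c t k == cnt d t k) [:: true; false])
      [:: Row; Col; Diag; Intr]) nodes) nodes.
Proof. vm_compute. reflexivity. Qed.
Definition c1 : node 5 5 := (@Ordinal 5 0 isT, @Ordinal 5 2 isT).
Definition w1 : node 5 5 := (@Ordinal 5 3 isT, @Ordinal 5 3 isT).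

Theorem mainTheorem3 : balanced K55 /\ ~ orbit_coloring K55.
Proof.
split.
  move=> c d Hcd t k.
  rewrite !cntE.
  move/allP: bal => /(_ c (nodes_all c)) /allP /(_ d (nodes_all d)).
  rewrite -!KcE Hcd eqxx implyTb => /allP H.
  have /H /allP : t \in [:: Row; Col; Diag; Intr] by case: t.
  by move=> H2; apply/eqP/H2; case: (k).
case=> Sigma H.
have [g gS gc] : exists2 g, g \in Sigma & Defs.act g c1 = c0 by apply/(H c1 c0); rewrite !KcE; vm_compute.
have Kg : forall e, K55 (Defs.act g e) = K55 e.
  by move=> e; symmetry; apply/(H e); exists g.
move/allP: nowit => /(_ (Defs.act g w1) (nodes_all _)).
rewrite -!KcE.
have E1 : K55 (c0.1, (Defs.act g w1).2) = K55 (c1.1, w1.2).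
  by rewrite -gc -(Kg (c1.1, w1.2)).
have E2 : K55 ((Defs.act g w1).1, c0.2) = K55 (w1.1, c1.2).
  by rewrite -gc -(Kg (w1.1, c1.2)).
rewrite E1 E2 Kg !KcE.
by vm_compute.
Qed.
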